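(* Let $R=\{u\in L:(u,u)=2\}$. Then $W(x)=\{\alpha x+\beta y+\gamma z\in R:\alpha\equiv1,\ \beta\equiv0,\ \gamma\equiv0 \pmod 2\}$, $W(y)=\{\alpha x+\beta y+\gamma z\in R:\beta\equiv1,\ \alpha\equiv0,\ \gamma\equiv0 \pmod 2\}$, $W(z)=\{\alpha x+\beta y+\gamma z\in R:\gamma\equiv1,\ \alpha\equiv0,\ \beta\equiv0 \pmod 2\}$.
   Context: $\mathbb F$ is a field of characteristic zero, $\mathfrak{sl}_2$ the Lie algebra of $2\times2$ trace-zero matrices over $\mathbb F$ with trace form $(u,v)=\mathrm{tr}(uv)$. Equitable basis: $x=\begin{pmatrix}1&0\\0&-1\end{pmatrix}$, $y=\begin{pmatrix}-1&2\\0&1\end{pmatrix}$, $z=\begin{pmatrix}-1&0\\-2&1\end{pmatrix}$, $L=\mathbb Zx\oplus\mathbb Zy\oplus\mathbb Zz$. For $u\in\{x,y,z\}$, $r_u(v)=v-(u,v)u$, and $W=\langle r_x,r_y,r_z\rangle$ (the Weyl group of the Kac–Moody algebra with Cartan matrix having $2$ on the diagonal and $-2$ off the diagonal, whose set of real roots equals $R$). $W(u)$ denotes the $W$-orbit of $u$. *)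

(* Defs.v *)
From HB Require Import structures.
From mathcomp Require Import all_boot all_order all_algebra.
Set Implicit Arguments. Unset Strict Implicit. Unset Printing Implicit Defensive.
Import GRing.Theory Num.Theory.
Local Open Scope ring_scope.

Definition mx2 (F : fieldType) (a b c d : F) : 'M[F]_2 :=
  \matrix_(i < 2, j < 2)
    if i == ord0 then (if j == ord0 then a else b) else (if j == ord0 then c else d).

Definition eqx (F : fieldType) : 'M[F]_2 := mx2 1 0 0 (-1).
Definition eqy (F : fieldType) : 'M[F]_2 := mx2 (-1) 2 0 1.
Definition eqz (F : fieldType) : 'M[F]_2 := mx2 (-1) 0 (-2) 1.

Definition trform (F : fieldType) (u v : 'M[F]_2) : F := \tr (u *m v).

Definition refl (F : fieldType) (u v : 'M[F]_2) : 'M[F]_2 := v - trform u v *: u.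

Definition comb (F : fieldType) (a b c : int) : 'M[F]_2 :=
  a%:~R *: eqx F + b%:~R *: eqy F + c%:~R *: eqz F.

(* W(u): the orbit of u under W = <r_x, r_y, r_z>.  Since the generators are
   involutions, W consists exactly of finite compositions of generators, so
   the orbit is the closure of {u} under the three reflections. *)
Inductive W_orbit (F : fieldType) (u : 'M[F]_2) : 'M[F]_2 -> Prop :=
  | W_orbit_self : W_orbit u u
  | W_orbit_step (w v : 'M[F]_2) :
      W_orbit u v -> (w = eqx F \/ w = eqy F \/ w = eqz F) ->
      W_orbit u (refl w v).

(* Main.v *)
From Stdlib Require Import ZArith Lia.
Require Import Defs.
From HB Require Import structures.
From mathcomp Require Import all_boot all_order all_algebra.
Import GRing.Theory Num.Theory.

Section ZPart.
Local Open Scope Z_scope.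

Definition Q (x y z : Z) := x*x + y*y + z*z - 2*x*y - 2*y*z - 2*z*x.

Inductive Zorb (s : Z*Z*Z) : Z*Z*Z -> Prop :=
| Zself : Zorb s s
| Zmx x y z : Zorb s (x,y,z) -> Zorb s (2*y+2*z-x, y, z)
| Zmy x y z : Zorb s (x,y,z) -> Zorb s (x, 2*x+2*z-y, z)
| Zmz x y z : Zorb s (x,y,z) -> Zorb s (x, y, 2*x+2*y-z).

Lemma hmax a b c : 0<=a -> 0<=b -> 0<=c -> b<=a -> c<=a -> Q a b c = 1 ->
  (a = 1 /\ b = 0 /\ c = 0) \/ Z.abs (2*b+2*c-a) < Z.abs a.
Proof.
intros ha hb hc hba hca hQ.
assert (key : a*(2*b+2*c-a) = (b-c)*(b-c) - 1) by (unfold Q in hQ; nia).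
destruct (Z.eq_dec b c) as [->|hne].
- left. assert (a*(4*c-a) = -1) by nia.
  assert (a = 1).
  { destruct (Z.eq_dec a 1) as [|hn]; [assumption|exfalso].
    assert (2 <= a) by nia.
    destruct (Z.le_gt_cases 0 (4*c-a)); nia. }
  subst. nia.
- right. assert (hpos : 0 <= (b-c)*(b-c) - 1) by nia.
  assert (ha0 : 0 < a) by lia.
  assert (h1 : 0 <= 2*b+2*c-a) by nia.
  assert (h2 : (b-c)*(b-c) <= a*a) by nia.
  assert (h3 : 2*b+2*c-a < a) by nia.
  lia.
Qed.

Definition endpoint x y z := (Z.abs x = 1 /\ y = 0 /\ z = 0) \/ (x = 0 /\ Z.abs y = 1 /\ z = 0) \/ (x = 0 /\ y = 0 /\ Z.abs z = 1).

Definition stepP x y z := endpoint x y z \/ Z.abs (2*y+2*z-x) < Z.abs x \/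
  Z.abs (2*x+2*z-y) < Z.abs y \/ Z.abs (2*x+2*y-z) < Z.abs z.

Lemma nnstep x y z : 0<=x -> 0<=y -> 0<=z -> Q x y z = 1 -> stepP x y z.
Proof.
intros hx hy hz hQ. unfold stepP, endpoint.
destruct (Z.le_ge_cases y x); destruct (Z.le_ge_cases z x);
destruct (Z.le_ge_cases z y).
all: first
  [ (destruct (hmax x y z) as [?|?]; [lia|lia|lia|lia|lia|exact hQ|lia|lia])
  | (destruct (hmax y x z) as [?|?]; [lia|lia|lia|lia|lia|unfold Q in *; lia|lia|lia])
  | (destruct (hmax z x y) as [?|?]; [lia|lia|lia|lia|lia|unfold Q in *; lia|lia|lia]) ].
Qed.

Lemma step x y z : Q x y z = 1 -> stepP x y z.
Proof.
intros hQ.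
assert (e1 : 4*(y*z) = (x-y-z)*(x-y-z) - 1) by (unfold Q in hQ; nia).
assert (e2 : 4*(x*z) = (y-x-z)*(y-x-z) - 1) by (unfold Q in hQ; nia).
assert (e3 : 4*(x*y) = (z-x-y)*(z-x-y) - 1) by (unfold Q in hQ; nia).
assert (h1 : 0 <= y*z) by (pose proof (Z.square_nonneg (x-y-z)); lia).
assert (h2 : 0 <= x*z) by (pose proof (Z.square_nonneg (y-x-z)); lia).
assert (h3 : 0 <= x*y) by (pose proof (Z.square_nonneg (z-x-y)); lia).
assert (hs : (0<=x/\0<=y/\0<=z) \/ (x<=0/\y<=0/\z<=0)) by nia.
destruct hs as [[? [? ?]]|[? [? ?]]].
- apply nnstep; auto.
- assert (hQ' : Q (-x) (-y) (-z) = 1) by (unfold Q in *; lia).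
  assert (Hn : stepP (-x) (-y) (-z)) by (apply nnstep; lia).
  unfold stepP, endpoint in *.
  destruct Hn as [[[? [? ?]]|[[? [? ?]]|[? [? ?]]]]|[hA|[hA|hA]]].
  + left; left; lia.
  + left; right; left; lia.
  + left; right; right; lia.
  + right; left.
    replace (2*y+2*z-x) with (-(2*(-y)+2*(-z)-(-x))) by ring.
    rewrite Z.abs_opp. rewrite Z.abs_opp in hA. lia.
  + right; right; left.
    replace (2*x+2*z-y) with (-(2*(-x)+2*(-z)-(-y))) by ring.
    rewrite Z.abs_opp. rewrite Z.abs_opp in hA. lia.
  + right; right; right.
    replace (2*x+2*y-z) with (-(2*(-x)+2*(-y)-(-z))) by ring.
    rewrite Z.abs_opp. rewrite Z.abs_opp in hA. lia.
Qed.

Definition Par (i : nat) x y z :=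
  match i with
  | O => x mod 2 = 1 /\ y mod 2 = 0 /\ z mod 2 = 0
  | S O => y mod 2 = 1 /\ x mod 2 = 0 /\ z mod 2 = 0
  | _ => z mod 2 = 1 /\ x mod 2 = 0 /\ y mod 2 = 0
  end.

Lemma modm a b c : (2*a+2*b-c) mod 2 = c mod 2.
Proof.
replace (2*a+2*b-c) with (c + (a+b-c)*2) by ring. apply Z.mod_add. lia.
Qed.

Definition ei (i : nat) : Z*Z*Z :=
  match i with O => (1,0,0) | S O => (0,1,0) | _ => (0,0,1) end.

Lemma descent n : forall x y z, Z.abs x + Z.abs y + Z.abs z <= Z.of_nat n ->
  Q x y z = 1 -> forall i, Par i x y z -> Zorb (ei i) (x,y,z).
Proof.
induction n as [|n IH]; intros x y z hn hQ i hP.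
- exfalso. assert (x = 0) by lia. assert (y=0) by lia. assert (z=0) by lia.
  subst. discriminate.
- destruct (step x y z hQ) as [he|[hd|[hd|hd]]].
  + unfold endpoint in he. destruct i as [|[|i]]; simpl in hP |- *.
    * destruct he as [[ha [-> ->]]|[[-> [? ->]]|[-> [-> ?]]]];
        [|exfalso; Z.div_mod_to_equations; lia..].
      destruct (Z.abs_spec x) as [[? ?]|[? ?]].
      -- replace x with 1 by lia. apply Zself.
      -- replace x with (-1) by lia. change (-1, 0, 0) with (2*0+2*0-1, 0, 0).
         apply Zmx, Zself.
    * destruct he as [[ha [-> ->]]|[[-> [? ->]]|[-> [-> ?]]]];
        [exfalso; Z.div_mod_to_equations; lia| |exfalso; Z.div_mod_to_equations; lia].
      destruct (Z.abs_spec y) as [[? ?]|[? ?]].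
      -- replace y with 1 by lia. apply Zself.
      -- replace y with (-1) by lia. change (0, -1, 0) with (0, 2*0+2*0-1, 0).
         apply Zmy, Zself.
    * destruct he as [[ha [-> ->]]|[[-> [? ->]]|[-> [-> ?]]]];
        [exfalso; Z.div_mod_to_equations; lia..|].
      destruct (Z.abs_spec z) as [[? ?]|[? ?]].
      -- replace z with 1 by lia. apply Zself.
      -- replace z with (-1) by lia. change (0, 0, -1) with (0, 0, 2*0+2*0-1).
         apply Zmz, Zself.
  + set (x' := 2*y+2*z-x).
    assert (Zorb (ei i) (x', y, z)).
    { apply IH. lia. unfold Q, x' in *; lia.
      destruct i as [|[|i]]; simpl in *; unfold x'; rewrite modm; tauto. }
    replace x with (2*y+2*z-x') by (unfold x'; lia). now apply Zmx.
  + set (y' := 2*x+2*z-y).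
    assert (Zorb (ei i) (x, y', z)).
    { apply IH. lia. unfold Q, y' in *; lia.
      destruct i as [|[|i]]; simpl in *; unfold y'; rewrite modm; tauto. }
    replace y with (2*x+2*z-y') by (unfold y'; lia). now apply Zmy.
  + set (z' := 2*x+2*y-z).
    assert (Zorb (ei i) (x, y, z')).
    { apply IH. lia. unfold Q, z' in *; lia.
      destruct i as [|[|i]]; simpl in *; unfold z'; rewrite modm; tauto. }
    replace z with (2*x+2*y-z') by (unfold z'; lia). now apply Zmz.
Qed.

End ZPart.

Local Open Scope ring_scope.

Definition zR (R : pzRingType) (z : Z) : R :=
  (Z.to_nat z)%:R - (Z.to_nat (- z))%:R.

Lemma natdiff (R : pzRingType) (p n q m : nat) :
  (p + m)%N = (q + n)%N -> p%:R - n%:R = q%:R - m%:R :> R.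
Proof.
move=> h. apply/eqP. rewrite subr_eq addrAC eq_sym subr_eq -!natrD h addnC.
by [].
Qed.

Lemma zR_add (R : pzRingType) a b : zR R (a + b) = zR R a + zR R b.
Proof.
rewrite /zR addrACA -opprD -!natrD; apply: natdiff.
apply/eqP; rewrite -(eqn_add2r 0). apply/eqP.
rewrite !addn0 -!plusE. lia.
Qed.

Lemma zR_opp (R : pzRingType) a : zR R (- a) = - zR R a.
Proof. by rewrite /zR Z.opp_involutive opprB. Qed.

Lemma zR_mul (R : pzRingType) a b : zR R (a * b) = zR R a * zR R b.
Proof.
rewrite /zR mulrBl !mulrBr -!natrM opprB addrACA -opprD -!natrD.
apply: natdiff. rewrite -!plusE -!multE.
destruct (Z.le_gt_cases 0 a); destruct (Z.le_gt_cases 0 b).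
- rewrite (Z2Nat.inj_mul a b) //. have -> : Z.to_nat (- (a*b)) = 0%N by lia.
  have -> : Z.to_nat (- a) = 0%N by lia. have -> : Z.to_nat (- b) = 0%N by lia. lia.
- have -> : Z.to_nat (a*b) = 0%N by nia. have -> : Z.to_nat (- a) = 0%N by lia.
  have -> : Z.to_nat b = 0%N by lia.
  rewrite -Z.mul_opp_r (Z2Nat.inj_mul a (-b)); lia.
- have -> : Z.to_nat (a*b) = 0%N by nia. have -> : Z.to_nat a = 0%N by lia.
  have -> : Z.to_nat (-b) = 0%N by lia.
  rewrite -Z.mul_opp_l (Z2Nat.inj_mul (-a) b); lia.
- have -> : Z.to_nat (-(a*b)) = 0%N by nia. have -> : Z.to_nat a = 0%N by lia.
  have -> : Z.to_nat b = 0%N by lia.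
  rewrite -Z.mul_opp_opp (Z2Nat.inj_mul (-a) (-b)); lia.
Qed.

Lemma zR0 (R : pzRingType) : zR R 0 = 0. Proof. by rewrite /zR /= subr0. Qed.
Lemma zR1 (R : pzRingType) : zR R 1 = 1. Proof. by rewrite /zR /= subr0. Qed.
Lemma zR2 (R : pzRingType) : zR R 2 = 2. Proof. by rewrite /zR /= subr0. Qed.
Lemma zRN1 (R : pzRingType) : zR R (-1) = -1. Proof. by rewrite /zR /= sub0r. Qed.
Lemma zRN2 (R : pzRingType) : zR R (-2) = -2. Proof. by rewrite /zR /= sub0r. Qed.

Lemma zRint (R : pzRingType) a : (zR int a)%:~R = zR R a.
Proof. by rewrite /zR intrB !natz. Qed.

Lemma zR_surj (a : int) : exists x, a = zR int x.
Proof.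
case: a => n.
- exists (Z.of_nat n). rewrite /zR Nat2Z.id.
  have -> : Z.to_nat (- Z.of_nat n) = 0%N by lia. by rewrite subr0 natz.
- exists (Z.sub (Z.opp (Z.of_nat n)) 1). rewrite /zR.
  have -> : Z.to_nat (- Z.of_nat n - 1) = 0%N by lia.
  have -> : Z.to_nat (- (- Z.of_nat n - 1)) = n.+1 by lia.
  by rewrite sub0r NegzE natz.
Qed.

Lemma zR_inj (F : fieldType) (charF0 : [pchar F] =i pred0) a b :
  zR F a = zR F b -> a = b.
Proof.
move=> h. have h0 : zR F (a - b) = 0 by rewrite zR_add zR_opp h subrr.
move: h0; rewrite /zR => /eqP; rewrite subr_eq0 => /eqP.
have cF := (iffLR (pcharf0P F) charF0).
destruct (Z.le_gt_cases 0 (a - b)).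
- have -> : Z.to_nat (- (a - b)) = 0%N by lia.
  move/eqP; rewrite cF => /eqP; lia.
- have -> : Z.to_nat (a - b) = 0%N by lia.
  move/eqP; rewrite eq_sym cF => /eqP; lia.
Qed.

Section Mat.
Variable F : fieldType.
Definition M (p q r s : Z) : 'M[F]_2 := mx2 (zR F p) (zR F q) (zR F r) (zR F s).

Lemma M_add a b c d a' b' c' d' :
  M a b c d + M a' b' c' d' = M (a+a') (b+b') (c+c') (d+d').
Proof.
apply/matrixP => i j; rewrite !mxE.
by case: (i == ord0); case: (j == ord0); rewrite zR_add.
Qed.

Lemma M_scale k a b c d : zR F k *: M a b c d = M (k*a) (k*b) (k*c) (k*d).
Proof.
apply/matrixP => i j; rewrite !mxE.
by case: (i == ord0); case: (j == ord0); rewrite zR_mul.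
Qed.

Lemma M_mul a b c d e f g h :
  M a b c d *m M e f g h = M (a*e+b*g) (a*f+b*h) (c*e+d*g) (c*f+d*h).
Proof.
apply/matrixP => i j; rewrite !mxE !big_ord_recl big_ord0 !mxE /=.
by case: i => [[|[|//]] Hi]; case: j => [[|[|//]] Hj] /=;
  rewrite addr0 zR_add !zR_mul.
Qed.

Lemma tr_M a b c d : \tr (M a b c d) = zR F (a + d).
Proof. by rewrite /mxtrace !big_ord_recl big_ord0 !mxE /= addr0 zR_add. Qed.

Lemma eqxM : eqx F = M 1 0 0 (-1).
Proof. by rewrite /M zR1 zR0 zRN1. Qed.
Lemma eqyM : eqy F = M (-1) 2 0 1.
Proof. by rewrite /M zR1 zR0 zRN1 zR2. Qed.
Lemma eqzM : eqz F = M (-1) 0 (-2) 1.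
Proof. by rewrite /M zR1 zR0 zRN1 zRN2. Qed.

Definition combZ x y z := comb F (zR int x) (zR int y) (zR int z).

Lemma combM x y z : combZ x y z = M (x-y-z) (2*y) (-2*z) (-x+y+z).
Proof.
rewrite /combZ /comb !zRint eqxM eqyM eqzM !M_scale !M_add.
congr M; ring.
Qed.
End Mat.

Section Main.
Variable F : fieldType.
Local Notation cZ := (@combZ F).

Lemma trQ x y z : trform (cZ x y z) (cZ x y z) = zR F (2 * Q x y z).
Proof. rewrite /trform combM M_mul tr_M; congr zR; unfold Q; ring. Qed.

Lemma refl_x x y z : refl (eqx F) (cZ x y z) = cZ (2*y+2*z-x) y z.
Proof.
rewrite /refl /trform eqxM !combM M_mul tr_M -scaleNr -zR_opp M_scale M_add.
congr M; ring.
Qed.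
Lemma refl_y x y z : refl (eqy F) (cZ x y z) = cZ x (2*x+2*z-y) z.
Proof.
rewrite /refl /trform eqyM !combM M_mul tr_M -scaleNr -zR_opp M_scale M_add.
congr M; ring.
Qed.
Lemma refl_z x y z : refl (eqz F) (cZ x y z) = cZ x y (2*x+2*y-z).
Proof.
rewrite /refl /trform eqzM !combM M_mul tr_M -scaleNr -zR_opp M_scale M_add.
congr M; ring.
Qed.

Lemma fwd u v : W_orbit u v -> forall x0 y0 z0, u = cZ x0 y0 z0 ->
  exists x y z, [/\ v = cZ x y z, Q x y z = Q x0 y0 z0,
    Z.modulo x 2 = Z.modulo x0 2, Z.modulo y 2 = Z.modulo y0 2 &
    Z.modulo z 2 = Z.modulo z0 2].
Proof.
elim => [|w v' _ IH hw] x0 y0 z0 hu.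
- by exists x0, y0, z0.
- have [x [y [z [-> hQ hx hy hz]]]] := IH x0 y0 z0 hu.
  case: hw => [->|[->|->]].
  + exists (Z.sub (2*y+2*z) x), y, z; split => //; first by rewrite refl_x.
    by rewrite -hQ /Q; ring.
    by rewrite modm.
  + exists x, (Z.sub (2*x+2*z) y), z; split => //; first by rewrite refl_y.
    by rewrite -hQ /Q; ring.
    by rewrite modm.
  + exists x, y, (Z.sub (2*x+2*y) z); split => //; first by rewrite refl_z.
    by rewrite -hQ /Q; ring.
    by rewrite modm.
Qed.
End Main.

Section Main2.
Variable F : fieldType.
Local Notation cZ := (@combZ F).

Lemma bwd s t : Zorb s t -> W_orbit (cZ s.1.1 s.1.2 s.2) (cZ t.1.1 t.1.2 t.2).
Proof.
elim => [|x y z _ IH|x y z _ IH|x y z _ IH] /=.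
- exact: W_orbit_self.
- rewrite -refl_x; apply: W_orbit_step IH _; by left.
- rewrite -refl_y; apply: W_orbit_step IH _; by right; left.
- rewrite -refl_z; apply: W_orbit_step IH _; by right; right.
Qed.

Lemma zR_mod x : (zR int x %% 2)%Z = zR int (Z.modulo x 2).
Proof.
have e : x = Z.add (Z.mul (Z.div x 2) 2) (Z.modulo x 2) by (Z.div_mod_to_equations; lia).
rewrite {1}e zR_add zR_mul zR2 modzMDl.
have [->|->] : Z.modulo x 2 = Z0 \/ Z.modulo x 2 = Zpos xH.
  by Z.div_mod_to_equations; lia.
- by rewrite zR0.
- by rewrite zR1.
Qed.

Lemma parmod1 x : (zR int x %% 2)%Z = 1 <-> Z.modulo x 2 = Zpos xH.
Proof.
rewrite zR_mod.
have [->|->] : Z.modulo x 2 = Z0 \/ Z.modulo x 2 = Zpos xH.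
  by Z.div_mod_to_equations; lia.
- by rewrite zR0; split => //; move/eqP.
- by rewrite zR1.
Qed.

Lemma parmod0 x : (zR int x %% 2)%Z = 0 <-> Z.modulo x 2 = Z0.
Proof.
rewrite zR_mod.
have [->|->] : Z.modulo x 2 = Z0 \/ Z.modulo x 2 = Zpos xH.
  by Z.div_mod_to_equations; lia.
- by rewrite zR0.
- by rewrite zR1; split => //; move/eqP.
Qed.
End Main2.

Section Main3.
Variable F : fieldType.
Hypothesis charF0 : [pchar F] =i pred0.
Local Notation cZ := (@combZ F).

Lemma orbit_iff i v :
  W_orbit (cZ (ei i).1.1 (ei i).1.2 (ei i).2) v <->
  exists x y z, [/\ v = cZ x y z, Q x y z = Zpos xH & Par i x y z].
Proof.
split.
- move/fwd => /(_ _ _ _ erefl) [x [y [z [-> hQ hx hy hz]]]].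
  exists x, y, z; split => //.
  + by rewrite hQ; clear hQ hx hy hz; case: i => [|[|i]].
  + by case: i hQ hx hy hz => [|[|i]] /= _ -> -> ->.
- move=> [x [y [z [-> hQ hP]]]].
  have := descent (Z.to_nat (Z.abs x + Z.abs y + Z.abs z)) x y z
    ltac:(lia) hQ i hP.
  by move/bwd.
Qed.

Lemma trform2 x y z : Q x y z = Zpos xH -> trform (cZ x y z) (cZ x y z) = 2.
Proof. by move=> hQ; rewrite trQ hQ zR2. Qed.

Lemma trform2' x y z : trform (cZ x y z) (cZ x y z) = 2 -> Q x y z = Zpos xH.
Proof.
rewrite trQ -(zR2 F) => /(@zR_inj F charF0) h. lia.
Qed.

Lemma eqx_c : eqx F = cZ 1 0 0. Proof. rewrite combM eqxM; congr M. Qed.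
Lemma eqy_c : eqy F = cZ 0 1 0. Proof. rewrite combM eqyM; congr M. Qed.
Lemma eqz_c : eqz F = cZ 0 0 1. Proof. rewrite combM eqzM; congr M. Qed.
End Main3.

Theorem proposition7p12 (F : fieldType) (charF0 : [pchar F] =i pred0) :
  (forall v : 'M[F]_2, W_orbit (eqx F) v <->
     exists a b c : int, [/\ v = comb F a b c, trform v v = 2,
       (a %% 2)%Z = 1, (b %% 2)%Z = 0 & (c %% 2)%Z = 0]) /\
  (forall v : 'M[F]_2, W_orbit (eqy F) v <->
     exists a b c : int, [/\ v = comb F a b c, trform v v = 2,
       (b %% 2)%Z = 1, (a %% 2)%Z = 0 & (c %% 2)%Z = 0]) /\
  (forall v : 'M[F]_2, W_orbit (eqz F) v <->
     exists a b c : int, [/\ v = comb F a b c, trform v v = 2,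
       (c %% 2)%Z = 1, (a %% 2)%Z = 0 & (b %% 2)%Z = 0]).
Proof.
split; [|split] => v.
- rewrite eqx_c (orbit_iff F 0). split.
  + move=> [x [y [z [-> hQ [hx [hy hz]]]]]].
    exists (zR int x), (zR int y), (zR int z); split.
    * by [].
    * exact: trform2.
    * exact/parmod1.
    * exact/parmod0.
    * exact/parmod0.
  + move=> [a [b [c [hv ht ha hb hc]]]].
    have [x ex] := zR_surj a; have [y ey] := zR_surj b; have [z ez] := zR_surj c.
    subst a b c. change (comb F _ _ _) with (combZ F x y z) in hv. subst v.
    exists x, y, z; split => //.
    * exact: (@trform2' F charF0 x y z ht).
    * by split; [apply/parmod1|split; apply/parmod0].
- rewrite eqy_c (orbit_iff F 1). split.
  + move=> [x [y [z [-> hQ [hy [hx hz]]]]]].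
    exists (zR int x), (zR int y), (zR int z); split.
    * by [].
    * exact: trform2.
    * exact/parmod1.
    * exact/parmod0.
    * exact/parmod0.
  + move=> [a [b [c [hv ht hb ha hc]]]].
    have [x ex] := zR_surj a; have [y ey] := zR_surj b; have [z ez] := zR_surj c.
    subst a b c. change (comb F _ _ _) with (combZ F x y z) in hv. subst v.
    exists x, y, z; split => //.
    * exact: (@trform2' F charF0 x y z ht).
    * by split; [apply/parmod1|split; apply/parmod0].
- rewrite eqz_c (orbit_iff F 2). split.
  + move=> [x [y [z [-> hQ [hz [hx hy]]]]]].
    exists (zR int x), (zR int y), (zR int z); split.
    * by [].
    * exact: trform2.
    * exact/parmod1.
    * exact/parmod0.
    * exact/parmod0.
  + move=> [a [b [c [hv ht hc ha hb]]]].
    have [x ex] := zR_surj a; have [y ey] := zR_surj b; have [z ez] := zR_surj c.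
    subst a b c. change (comb F _ _ _) with (combZ F x y z) in hv. subst v.
    exists x, y, z; split => //.
    * exact: (@trform2' F charF0 x y z ht).
    * by split; [apply/parmod1|split; apply/parmod0].
Qed.
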